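(* Let $X$ be a real Banach space and $(x_n)$ a bounded sequence in $X$. Suppose that $c>0$ is such that \[ \Big\|\sum_{j=1}^n \alpha_j x_j\Big\|\ge c\sum_{j=1}^n |\alpha_j| \] for all $n\in\mathbb{N}$ and all real numbers $\alpha_1,\dots,\alpha_n$. Then (i) $\delta_X(x_n)\ge 2c$, and (ii) $\operatorname{d}(\operatorname{clust}_{X^{**}}(x_n),X)\ge c$.
   Context: $X$ is identified with its canonical image in $X^{**}$. For a bounded sequence $(x_n)$ in $X$, $\operatorname{clust}_{X^{**}}(x_n)$ is the set of all weak$^*$ cluster points of $(x_n)$ in $X^{**}$ and $\delta_X(x_n)$ is the norm-diameter of this set (equivalently $\sup_{x^*\in B_{X^*}}(\limsup_n x^*(x_n)-\liminf_n x^*(x_n))$). For nonempty sets $A,B$, $\operatorname{d}(A,B)=\inf\{\|a-b\|: a\in A,b\in B\}$. *)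

(* Defs.v *)
From HB Require Import structures.
From mathcomp Require Import all_boot all_order all_algebra.
From mathcomp Require Import all_classical all_reals all_analysis.
Set Implicit Arguments. Unset Strict Implicit. Unset Printing Implicit Defensive.
Import Order.TTheory GRing.Theory Num.Theory.
Import numFieldNormedType.Exports.
Local Open Scope classical_set_scope.
Local Open Scope ring_scope.

Section Bidual.
Variables (R : realType) (X : normedModType R).

Definition lin_fun (f : X -> R) : Prop :=
  forall (a : R) (u v : X), f (a *: u + v) = a * f u + f v.

Definition dual_el (f : X -> R) : Prop :=
  lin_fun f /\ exists M : R, forall x, `|f x| <= M * `|x|.

Definition dual_ball (f : X -> R) : Prop :=
  lin_fun f /\ forall x, `|f x| <= `|x|.

(* X^{**}: bounded linear functionals on X^*; an element Phi is represented
   by a function on (X -> R) whose values off X^* are irrelevant. *)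
Definition bidual_el (Phi : (X -> R) -> R) : Prop :=
  (forall (a : R) (f g : X -> R), dual_el f -> dual_el g ->
      Phi (fun x => a * f x + g x) = a * Phi f + Phi g) /\
  exists M : R, forall f, dual_ball f -> `|Phi f| <= M.

Definition bidual_norm (Phi : (X -> R) -> R) : \bar R :=
  ereal_sup [set (`|Phi f|)%:E | f in dual_ball].

Definition canon (x : X) : (X -> R) -> R := fun f => f x.

Definition bidual_sub (Phi Psi : (X -> R) -> R) : (X -> R) -> R :=
  fun f => Phi f - Psi f.

(* weak^* cluster points of (x_n) in X^{**}: every basic weak^*
   neighbourhood of Phi (finitely many functionals, radius eps) contains
   x_n for infinitely many n *)
Definition clust (x : nat -> X) : set ((X -> R) -> R) :=
  [set Phi | bidual_el Phi /\
     forall (fs : seq (X -> R)) (eps : R), (forall f, f \in fs -> dual_el f) ->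
       0 < eps -> forall N : nat, exists2 n : nat, (N <= n)%N &
         forall f, f \in fs -> `|Phi f - f (x n)| < eps].

Definition delta (x : nat -> X) : \bar R :=
  ereal_sup [set bidual_norm (bidual_sub Phi Psi)
            | Phi in clust x & Psi in clust x].

Definition dist_clust_X (x : nat -> X) : \bar R :=
  ereal_inf [set bidual_norm (bidual_sub Phi (canon y))
            | Phi in clust x & y in [set: X]].

End Bidual.

(* Main.v *)
Require Import Defs.
From HB Require Import structures.
From mathcomp Require Import all_boot all_order all_algebra.
From mathcomp Require Import all_classical all_reals all_analysis.
From mathcomp Require Import ring lra.
Import Order.TTheory GRing.Theory Num.Theory.
Import numFieldNormedType.Exports.
Local Open Scope classical_set_scope.
Local Open Scope ring_scope.

Section HBsec.
Variables (R : realType) (X : normedModType R).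

Definition lingraph (G : set (X * R)) :=
  G (0,0) /\
  (forall a x r x' r', G (x,r) -> G (x',r') -> G (a *: x + x', a * r + r')) /\
  (forall r, G (0, r) -> r = 0).
Definition domg (G : set (X * R)) := forall x r, G (x,r) -> r <= `|x|.

Lemma lg_scale G a x r : lingraph G -> G (x, r) -> G (a *: x, a * r).
Proof.
move=> [G00 [Gc _]] Gx.
by have := Gc a x r 0 0 Gx G00; rewrite !addr0.
Qed.

Lemma lg_fun G x r r' : lingraph G -> G (x, r) -> G (x, r') -> r = r'.
Proof.
move=> lG Gx Gx'; have [_ [Gc Gf]] := lG.
have := Gc (-1) x r x r' Gx Gx'.
rewrite scaleN1r addNr => /Gf; lra.
Qed.

Arguments lg_scale {G} a {x r}.
Arguments lg_fun {G x r r'}.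

Lemma hahn_banach (G0 : set (X * R)) : lingraph G0 -> domg G0 ->
  exists f, dual_ball f /\ forall x r, G0 (x, r) -> f x = r.
Proof.
move=> lG0 dG0.
pose P := fun G : set (X * R) => G = set0 \/ (lingraph G /\ domg G /\ G0 `<=` G).
have [A [PA Amax]] : exists A, P A /\ forall B, A `<` B -> ~ P B.
  apply: Zorn_bigcup => F FP Ftot.
  have key H : F H -> H !=set0 -> lingraph H /\ domg H /\ G0 `<=` H.
    move=> FH [p Hp]; case: (FP H FH) => // H0.
    by rewrite H0 in Hp.
  case: (pselect (exists G, F G /\ G !=set0)) => [[G [FG Gn]]|nG].
    right; have [lG [dG sG]] := key G FG Gn.
    split; last split.
    - split; first by exists G => //; case: lG.
      split.
        move=> a x r x' r' [H1 FH1 H1x] [H2 FH2 H2x].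
        have [s12|s21] := Ftot H1 H2 FH1 FH2.
        + have [[_ [Hc _]] _] := key H2 FH2 (ex_intro _ _ H2x).
          by exists H2 => //; apply: Hc => //; apply: s12.
        + have [[_ [Hc _]] _] := key H1 FH1 (ex_intro _ _ H1x).
          by exists H1 => //; apply: Hc => //; apply: s21.
      move=> r [H FH Hx].
      by have [[_ [_ Hf]] _] := key H FH (ex_intro _ _ Hx); apply: Hf.
    - move=> x r [H FH Hx].
      by have [_ [dH _]] := key H FH (ex_intro _ _ Hx); apply: dH.
    - by move=> p /sG Gp; exists G.
  left; apply/seteqP; split => // p [H FH Hp].
  by apply: nG; exists H; split => //; exists p.
have [A0|[lA [dA sA]]] := PA.
  exfalso; apply: (Amax G0); last by right; split => //; split.
  rewrite A0; split => // /(_ (0,0)); apply; case: lG0 => //.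
have [A00 [Ac Af]] := lA.
have tot : forall x0, exists r, A (x0, r).
  move=> x0; apply: contrapT => nex.
  pose S := [set z | exists g r, A (g, r) /\ z = r - `|g - x0|].
  have S0 : S !=set0 by exists (0 - `|0 - x0|); exists 0, 0.
  have keyi g r g' r' : A (g, r) -> A (g', r') -> r - `|g - x0| <= `|g' + x0| - r'.
    move=> Ag Ag'; have := Ac 1 g r g' r' Ag Ag'.
    rewrite scale1r mul1r => /dA.
    have := ler_normD (g - x0) (g' + x0).
    have -> : g - x0 + (g' + x0) = g + g' by rewrite addrCA subrK addrC.
    lra.
  have hub : has_ubound S.
    exists `|x0| => z [g [r [Ag ->]]].
    have := dA _ _ Ag; have := ler_normD (g - x0) x0; rewrite subrK; lra.
  pose t := sup S.
  have t1 g r : A (g, r) -> r - `|g - x0| <= t.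
    by move=> Ag; apply: ub_le_sup => //; exists g, r.
  have t2 g r : A (g, r) -> t <= `|g + x0| - r.
    move=> Ag; apply: ge_sup => // z [g' [r' [Ag' ->]]]; exact: keyi.
  pose G' := [set p | exists g r a, A (g, r) /\ p = (g + a *: x0, r + a * t)].
  have AG' : A `<=` G'.
    by case=> g r Ag; exists g, r, 0; rewrite scale0r mul0r !addr0.
  apply: (Amax G').
    split => // /(_ (x0, t)) h.
    apply: nex; exists t; apply: h; exists 0, 0, 1.
    by rewrite scale1r mul1r !add0r; split.
  right; split; last split.
  - split; first exact: AG'.
    split.
      move=> b _ _ _ _ [g1 [r1 [a1 [Ag1 [-> ->]]]]] [g2 [r2 [a2 [Ag2 [-> ->]]]]].
      exists (b *: g1 + g2), (b * r1 + r2), (b * a1 + a2); split; first exact: Ac.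
      congr pair; last by ring.
      rewrite !scalerDr scalerDl scalerA.
      by rewrite -!addrA; congr (_ + _); rewrite addrCA.
    move=> r' [g [r [a [Ag [e1 ->]]]]].
    have [a0|a0] := eqVneq a 0.
      move: e1; rewrite a0 scale0r addr0 => e1; rewrite -e1 in Ag.
      by rewrite (Af _ Ag) mul0r addr0.
    exfalso; apply: nex; exists (- a^-1 * r).
    have -> : x0 = - a^-1 *: g.
      apply: (scalerI a0); rewrite scalerA mulrN mulfV // scaleN1r.
      by apply/eqP; rewrite -subr_eq0 opprK addrC -e1.
    exact: lg_scale.
  - move=> _ _ [g [r [a [Ag [-> ->]]]]].
    have [a0|a0|a0] := ltgtP a 0.
    + pose b := - a.
      have bp : 0 < b by rewrite /b; lra.
      have := t1 _ _ (lg_scale b^-1 lA Ag).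
      have e : `|g + a *: x0| = b * `|b^-1 *: g - x0|.
        have -> : b * `|b^-1 *: g - x0| = `|b *: (b^-1 *: g - x0)|.
          by rewrite normrZ gtr0_norm.
        rewrite scalerBr scalerA mulfV ?gt_eqF // scale1r /b scaleNr opprK.
        by [].
      rewrite e => h.
      have := ler_wpM2l (ltW bp) h.
      rewrite mulrBr mulrA mulfV ?gt_eqF // mul1r.
      rewrite /b; lra.
    + have := t2 _ _ (lg_scale a^-1 lA Ag).
      have e : `|g + a *: x0| = a * `|a^-1 *: g + x0|.
        have -> : a * `|a^-1 *: g + x0| = `|a *: (a^-1 *: g + x0)|.
          by rewrite normrZ gtr0_norm.
        by rewrite scalerDr scalerA mulfV ?gt_eqF // scale1r.
      rewrite e => h.
      have := ler_wpM2l (ltW a0) h.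
      rewrite mulrBr mulrA mulfV ?gt_eqF // mul1r; lra.
    + by rewrite a0 scale0r mul0r !addr0; apply: dA.
  - by move=> p /sA /AG'.
pose f := fun x => sval (cid (tot x)).
have fP x : A (x, f x) by rewrite /f; case: cid.
exists f; split.
  split.
    move=> a u v; apply: (lg_fun lA (fP _)); exact: Ac.
  move=> x; rewrite ler_norml; apply/andP; split.
    have := dA _ _ (lg_scale (-1) lA (fP x)); rewrite scaleN1r normrN; lra.
  exact: dA.
by move=> x r /sA Ax; apply: (lg_fun lA (fP x)).
Qed.


Lemma sum_tr (V : zmodType) N n (F : nat -> V) : (n <= N)%N ->
  \sum_(j < N) (if (j < n)%N then F j else 0) = \sum_(j < n) F j.
Proof. by move=> nN; rewrite (big_ord_widen _ F nN) -big_mkcond. Qed.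

Lemma sum_combV n n' (al al' : nat -> R) a (v : nat -> X) :
  \sum_(j < n + n') (a * (if (j < n)%N then al j else 0) +
      (if (j < n')%N then al' j else 0)) *: v j =
  a *: \sum_(j < n) al j *: v j + \sum_(j < n') al' j *: v j.
Proof.
rewrite (eq_bigr (fun j : 'I_(n + n') => a *: (if (j < n)%N then al j *: v j else 0)
   + (if (j < n')%N then al' j *: v j else 0))); last first.
  move=> j _; rewrite scalerDl -scalerA; congr (_ + _).
    by congr (_ *: _); case: ifP => _ //; rewrite scale0r.
  by case: ifP => _ //; rewrite scale0r.
rewrite big_split /= -scaler_sumr.
by rewrite (@sum_tr _ _ _ (fun j => al j *: v j) (leq_addr n' n))
  (@sum_tr _ _ _ (fun j => al' j *: v j) (leq_addl n n')).
Qed.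

Lemma sum_combR n n' (al al' : nat -> R) a (v : nat -> R) :
  \sum_(j < n + n') (a * (if (j < n)%N then al j else 0) +
      (if (j < n')%N then al' j else 0)) * v j =
  a * \sum_(j < n) al j * v j + \sum_(j < n') al' j * v j.
Proof.
rewrite (eq_bigr (fun j : 'I_(n + n') => a * (if (j < n)%N then al j * v j else 0)
   + (if (j < n')%N then al' j * v j else 0))); last first.
  move=> j _; rewrite mulrDl -mulrA; congr (_ + _).
    by congr (_ * _); case: ifP => _ //; rewrite mul0r.
  by case: ifP => _ //; rewrite mul0r.
rewrite big_split /= -mulr_sumr.
by rewrite (@sum_tr _ _ _ (fun j => al j * v j) (leq_addr n' n))
  (@sum_tr _ _ _ (fun j => al' j * v j) (leq_addl n n')).
Qed.

Lemma sum_deltaV j (v : nat -> X) :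
  \sum_(i < j.+1) (if (i : nat) == j then 1 else 0) *: v i = v j.
Proof.
rewrite big_ord_recr /= eqxx scale1r big1 ?add0r // => i _.
by rewrite (ltn_eqF (ltn_ord i)) scale0r.
Qed.

Lemma sum_deltaR j (v : nat -> R) :
  \sum_(i < j.+1) (if (i : nat) == j then 1 else 0) * v i = v j.
Proof.
rewrite big_ord_recr /= eqxx mul1r big1 ?add0r // => i _.
by rewrite (ltn_eqF (ltn_ord i)) mul0r.
Qed.

Lemma l1_functional (c : R) (w : nat -> X) (s : nat -> R) (y : X) : 0 < c ->
  (forall j, `|s j| <= 1) ->
  (forall n (al : nat -> R) (be : R),
     c * \sum_(j < n) `|al j| <= `|\sum_(j < n) al j *: w j + be *: y|) ->
  exists f, dual_ball f /\ (forall j, f (w j) = c * s j) /\ f y = 0.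
Proof.
move=> c0 s1 hyp.
pose G0 := [set p : X * R | exists (n : nat) (al : nat -> R) (be : R),
  p = (\sum_(j < n) al j *: w j + be *: y, c * \sum_(j < n) al j * s j)].
have lG0 : lingraph G0.
  split.
    exists 0%N, (fun=> 0), 0.
    by rewrite !big_ord0 scale0r addr0 mulr0.
  split.
    move=> a _ _ _ _ [n [al [be [-> ->]]]] [n' [al' [be' [-> ->]]]].
    exists (n + n')%N, (fun j => a * (if (j < n)%N then al j else 0) +
      (if (j < n')%N then al' j else 0)), (a * be + be').
    rewrite sum_combV sum_combR; congr pair; last by ring.
    by rewrite scalerDr scalerDl scalerA addrACA.
  move=> r [n [al [be [e ->]]]].
  have := hyp n al be; rewrite -e normr0 => h.
  have h0 : \sum_(j < n) `|al j| = 0.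
    apply/eqP; rewrite eq_le sumr_ge0 ?andbT //.
    by rewrite -(pmulr_rle0 _ c0).
  have := psumr_eq0P (fun (i : 'I_n) _ => normr_ge0 (al i)) h0 => h1.
  by rewrite big1 ?mulr0 // => i _; have /normr0_eq0 -> := h1 i isT; rewrite mul0r.
have dG0 : domg G0.
  move=> _ _ [n [al [be [-> ->]]]]; apply: le_trans (hyp n al be).
  rewrite ler_pM2l //; apply: ler_sum => i _.
  apply: le_trans (ler_norm _) _; rewrite normrM.
  by rewrite -[leRHS]mulr1 ler_wpM2l.
have [f [fb fG]] := @hahn_banach G0 lG0 dG0.
exists f; split => //; split.
  move=> j; apply: fG; exists j.+1, (fun i => if i == j then 1 else 0), 0.
  by rewrite sum_deltaV sum_deltaR scale0r addr0.
apply: fG; exists 0%N, (fun=> 0), 1.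
by rewrite !big_ord0 scale1r add0r mulr0.
Qed.


Lemma dual_ball_el (f : X -> R) : dual_ball f -> dual_el f.
Proof. by move=> [lf nf]; split => //; exists 1 => x; rewrite mul1r. Qed.

Lemma ultra_conv (U : set_system nat) (UU : UltraFilter U) (u : nat -> R) B :
  (forall n, `|u n| <= B) -> exists p : R, u @ U --> p.
Proof.
move=> uB.
have [p [_ cp]] : `[- B, B]%classic `&` cluster (u @ U) !=set0.
  apply: (@segment_compact R (- B) B) => //=.
  by apply: filterS filterT => n _ /=; rewrite in_itv /= -ler_norml.
exists p; apply/cvgrPdist_lt => e e0.
have [//|hC] := in_ultra_setVsetC [set n | `|p - u n| < e] UU.
have hC' : U [set n | e <= `|p - u n|].
  by apply: (filterS _ hC) => n /= h; rewrite leNgt; apply/negP.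
have [q [/= Aq Bq]] := cp [set q | e <= `|p - q|] _ hC' (nbhsx_ballx p e e0).
by move: Bq; rewrite -ball_normE /= ltNge Aq.
Qed.

Lemma clust_exists (z : nat -> X) M : (forall n, `|z n| <= M) ->
  exists Phi, clust z Phi.
Proof.
move=> zM.
have [U [UU sU]] := ultraFilterLemma (@eventually_filter).
pose Phi := fun f : X -> R => lim ((f \o z) @ U).
have PhiP f : dual_el f -> (f \o z) @ U --> Phi f.
  move=> [_ [K hK]].
  have hb : forall n, `|(f \o z) n| <= `|K| * M.
    move=> n /=; apply: le_trans (hK _) _.
    apply: le_trans (ler_wpM2r (normr_ge0 _) (ler_norm K)) _.
    by rewrite ler_wpM2l.
  have [p hp] := @ultra_conv U UU (f \o z) (`|K| * M) hb.
  by rewrite /Phi (cvg_lim (@norm_hausdorff _ R^o) hp).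
have evU (f : X -> R) eps : dual_el f -> 0 < eps ->
    U [set n | `|Phi f - f (z n)| < eps].
  by move=> /PhiP /cvgrPdist_lt h e0; apply: h.
exists Phi; split.
  split.
    move=> a f g ef eg.
    apply: (cvg_lim (@norm_hausdorff _ R^o)).
    have -> : (fun x => a * f x + g x) \o z =
      (fun n => a * f (z n)) + (fun n => g (z n)) by [].
    apply: cvgD; last exact: PhiP.
    exact: cvgMl_tmp (PhiP _ ef).
  exists M => f fb; apply/ler_addgt0Pr => e e0.
  have [n /= hn] := filter_ex (evU f e (@dual_ball_el f fb) e0).
  have : `|f (z n)| <= M by apply: le_trans (proj2 fb _) (zM n).
  have := ler_distD (f (z n)) (Phi f) 0.
  rewrite !subr0; lra.
move=> fs eps hfs e0 N.
have hU : U [set n | forall f, f \in fs -> `|Phi f - f (z n)| < eps].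
  elim: fs hfs => [|g fs IH] hfs.
    by apply: filterS filterT => n _ f; rewrite in_nil.
  have hfs' : forall f, f \in fs -> dual_el f.
    by move=> f hf; apply: hfs; rewrite in_cons hf orbT.
  apply: (filterS _ (filterI (evU g eps (hfs g (mem_head _ _)) e0) (IH hfs'))).
  move=> n [hg hr] f; rewrite in_cons => /orP [/eqP ->|hf] //.
  exact: hr.
have [n [hn1 hn2]] := filter_ex (filterI hU (sU _ (nbhs_infty_ge N))).
by exists n.
Qed.

Lemma clust_sub (z : nat -> X) (g : nat -> nat) Phi :
  (forall n, (n <= g n)%N) -> clust (z \o g) Phi -> clust z Phi.
Proof.
move=> hg [bP cP]; split => // fs eps hfs e0 N.
have [n hn h] := cP fs eps hfs e0 N.
exists (g n) => //; exact: leq_trans hn (hg n).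
Qed.

Lemma clust_const (z : nat -> X) Phi f K v : clust z Phi -> dual_el f ->
  (forall n, (K <= n)%N -> f (z n) = v) -> Phi f = v.
Proof.
move=> [_ cP] ef hv; apply/eqP; rewrite -subr_eq0 -normr_le0.
apply/ler_addgt0Pr => e e0; rewrite add0r.
have hfs : forall g, g \in [:: f] -> dual_el g.
  by move=> g; rewrite inE => /eqP ->.
have [n hn /(_ f (mem_head _ _)) h] := cP [:: f] e hfs e0 K.
by rewrite -(hv n hn) ltW.
Qed.


Lemma goodK (x : nat -> X) c y : 0 < c ->
  (forall n (al : nat -> R),
     c * \sum_(j < n) `|al j| <= `|\sum_(j < n) al j *: x j|) ->
  exists K, forall n (al : nat -> R) be,
    c * \sum_(j < n) `|al j| <= `|\sum_(j < n) al j *: x (K + j)%N + be *: y|.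
Proof.
move=> c0 hyp.
case: (pselect (forall n (al : nat -> R) be, c * \sum_(j < n) `|al j| <=
   `|\sum_(j < n) al j *: x (0 + j)%N + be *: y|)) => [h|]; first by exists 0%N.
move=> /existsNP [n /existsNP [al /existsNP [be /negP]]]; rewrite -ltNge => bad.
exists n => n' al' be'; rewrite leNgt; apply/negP => bad'.
set S := \sum_(j < n) `|al j| in bad; set S' := \sum_(j < n') `|al' j| in bad'.
set Z := \sum_(j < n) al j *: x j in bad.
set Z' := \sum_(j < n') al' j *: x (n + j)%N in bad'.
have comb u v : c * (`|u| * S + `|v| * S') <= `|u *: Z + v *: Z'|.
  pose ga := fun j => if (j < n)%N then u * al j else v * al' (j - n)%N.
  have := hyp (n + n')%N ga.
  have -> : \sum_(j < n + n') `|ga j| = `|u| * S + `|v| * S'.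
    rewrite big_split_ord /=; congr (_ + _); rewrite /S /S' mulr_sumr;
      apply: eq_bigr => i _; rewrite /ga /=.
      by rewrite ltn_ord normrM.
    by rewrite ltnNge leq_addr /= addKn normrM.
  have -> : \sum_(j < n + n') ga j *: x j = u *: Z + v *: Z'.
    rewrite big_split_ord /=; congr (_ + _); rewrite /Z /Z' scaler_sumr;
      apply: eq_bigr => i _; rewrite /ga /=.
      by rewrite ltn_ord scalerA.
    by rewrite ltnNge leq_addr /= addKn scalerA.
  by [].
have be0 : be != 0.
  apply/eqP => be0; have := comb 1 0.
  rewrite normr1 normr0 mul0r addr0 mul1r scale1r scale0r addr0.
  move: bad; rewrite be0 scale0r addr0; lra.
have be0' : be' != 0.
  apply/eqP => e0; have := comb 0 1.
  rewrite normr1 normr0 mul0r add0r mul1r scale1r scale0r add0r.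
  move: bad'; rewrite e0 scale0r addr0; lra.
have := comb be^-1 (- be'^-1).
have -> : be^-1 *: Z + (- be'^-1) *: Z' =
    be^-1 *: (Z + be *: y) - be'^-1 *: (Z' + be' *: y).
  rewrite !scalerDr !scalerA !mulVf // !scale1r scaleNr opprD addrACA subrr.
  by rewrite addr0.
move=> h.
have := ler_normB (be^-1 *: (Z + be *: y)) (be'^-1 *: (Z' + be' *: y)).
rewrite !normrZ !normfV => h2.
have A0 : 0 < `|be|^-1 by rewrite invr_gt0 normr_gt0.
have B0 : 0 < `|be'|^-1 by rewrite invr_gt0 normr_gt0.
move: h; rewrite normrN !normfV => h.
have h3 : `|be|^-1 * `|Z + be *: y| < `|be|^-1 * (c * S) by rewrite ltr_pM2l.
have h4 : `|be'|^-1 * `|Z' + be' *: y| < `|be'|^-1 * (c * S') by rewrite ltr_pM2l.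
nra.
Qed.

End HBsec.

Theorem lemma2p1 (R : realType) (X : completeNormedModType R)
  (x : nat -> X) (c : R) :
  (exists M : R, forall n, `|x n| <= M) ->
  0 < c ->
  (forall (n : nat) (alpha : nat -> R),
      c * (\sum_(j < n) `|alpha j|) <= `|\sum_(j < n) alpha j *: x j|) ->
  ((2 * c)%:E <= delta x)%E /\ (c%:E <= dist_clust_X x)%E.
Proof.
move=> [M hM] c0 hyp.
split.
  have s1 : forall j, `|(-1) ^+ j : R| <= 1 by move=> j; rewrite normrX normrN1 expr1n.
  have hyp' : forall n (al : nat -> R) (be : R),
      c * \sum_(j < n) `|al j| <= `|\sum_(j < n) al j *: x j + be *: (0 : X)|.
    by move=> n al be; rewrite scaler0 addr0; exact: hyp.
  have [f [fb [fw _]]] := @l1_functional R X c x (fun j => (-1) ^+ j) 0 c0 s1 hyp'.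
  have [Phi cPhi] := @clust_exists R X (fun n => x (2 * n)%N) M (fun n => hM _).
  have [Psi cPsi] := @clust_exists R X (fun n => x (2 * n).+1) M (fun n => hM _).
  have ePhi : Phi f = c.
    apply: (@clust_const R X _ _ _ 0%N _ cPhi (@dual_ball_el R X f fb)) => n _.
    by rewrite fw exprM sqrrN !expr1n mulr1.
  have ePsi : Psi f = - c.
    apply: (@clust_const R X _ _ _ 0%N _ cPsi (@dual_ball_el R X f fb)) => n _.
    by rewrite fw exprS exprM sqrrN !expr1n mulr1 mulrN1.
  have cPhi' : clust x Phi.
    by apply: (@clust_sub R X x (fun n => (2 * n)%N)) cPhi => n; rewrite leq_pmull.
  have cPsi' : clust x Psi.
    apply: (@clust_sub R X x (fun n => (2 * n).+1)) cPsi => n.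
    by apply: leqW; rewrite leq_pmull.
  have hb : ((2 * c)%:E <= bidual_norm (bidual_sub Phi Psi))%E.
    apply: (@le_trans _ _ (`|bidual_sub Phi Psi f|)%:E); last first.
      by apply: ereal_sup_ubound; exists f.
    rewrite lee_fin /bidual_sub ePhi ePsi opprK ger0_norm; last by lra.
    lra.
  apply: le_trans hb _; apply: ereal_sup_ubound.
  by exists Phi => //; exists Psi.
apply: le_ereal_inf_tmp => _ [Phi cPhi [y _ <-]].
have [K hK] := @goodK R X x c y c0 hyp.
have s1 : forall j : nat, `|(fun=> 1) j : R| <= 1 by move=> j; rewrite normr1.
have [g [gb [gw gy]]] :=
  @l1_functional R X c (fun j => x (K + j)%N) (fun=> 1) y c0 s1 hK.
have eg : Phi g = c.
  apply: (@clust_const R X _ _ _ K _ cPhi (@dual_ball_el R X g gb)) => n hn.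
  by rewrite -(subnKC hn) gw mulr1.
have hh : ((`|bidual_sub Phi (Defs.canon y) g|)%:E <=
    bidual_norm (bidual_sub Phi (Defs.canon y)))%E.
  by apply: ereal_sup_ubound; exists g.
apply: le_trans hh.
by rewrite lee_fin /bidual_sub /Defs.canon eg gy subr0 ger0_norm // ltW.
Qed.
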